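(* Let $G'$ be a finite directed acyclic graph with distinct vertices $s'_1,\dots,s'_n$ (sources, with no incoming edges) and $t'_1,t'_2$ (terminals, with no outgoing edges) such that for every $i\in\{1,\dots,n\}$ and $j\in\{1,2\}$ there is a directed path from $s'_i$ to $t'_j$. Then there exists a subgraph $G^*$ of $G'$ such that (i) for every $i$ and $j$ there is exactly one directed path from $s'_i$ to $t'_j$ in $G^*$, and (ii) $G^*$ is minimal: for every edge $e$ of $G^*$, removing $e$ from $G^*$ leaves some pair $s'_i,t'_j$ with no directed path from $s'_i$ to $t'_j$.
   Context: ''Exactly one directed path'' means there is a directed path from $s'_i$ to $t'_j$ and no other, distinct, directed path between them (paths are sequences of edges). *)

(* Defs.v *)
(* A finite directed (multi)graph is given by a finite vertex
   type V, a finite edge type E and maps src dst : E -> V.  A subgraph is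
   represented by its edge set A : {set E}. *)
From mathcomp Require Import all_boot.
Set Implicit Arguments. Unset Strict Implicit. Unset Printing Implicit Defensive.

Fixpoint walk (V : eqType) (E : Type) (src dst : E -> V) (s t : V) (p : seq E)
  : bool :=
  match p with
  | [::] => s == t
  | e :: p' => (src e == s) && walk src dst (dst e) t p'
  end.

(* p is a directed path from s to t using only edges of the subgraph A
   (vertex-distinctness is automatic in an acyclic graph). *)
Definition dpath (V : eqType) (E : finType) (src dst : E -> V) (A : {set E})
  (s t : V) (p : seq E) : bool :=
  all (fun e => e \in A) p && walk src dst s t p.

Definition acyclic (V : eqType) (E : Type) (src dst : E -> V) : Prop :=
  forall (v : V) (p : seq E), walk src dst v v p -> p = [::].

(* Main.v *)
Require Import Defs.
From mathcomp Require Import all_boot.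
From Stdlib Require Import ClassicalEpsilon.
Set Implicit Arguments. Unset Strict Implicit. Unset Printing Implicit Defensive.

Definition asb (P : Prop) : bool :=
  if excluded_middle_informative P then true else false.

Lemma asbP (P : Prop) : reflect P (asb P).
Proof. rewrite /asb; case: excluded_middle_informative => H; by constructor. Qed.

Lemma walk_cat (V : eqType) (E : Type) (src dst : E -> V) x y z p q :
  walk src dst x y p -> walk src dst y z q -> walk src dst x z (p ++ q).
Proof.
elim: p x => [|e p IH] x /=; first by move/eqP->.
by case/andP=> -> /IH H /H ->.
Qed.

Lemma dpath_cat (V : eqType) (E : finType) (src dst : E -> V) A x y z p q :
  dpath src dst A x y p -> dpath src dst A y z q -> dpath src dst A x z (p ++ q).
Proof.
rewrite /dpath all_cat => /andP[Hp Wp] /andP[Hq Wq].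
by rewrite Hp Hq (walk_cat Wp Wq).
Qed.

Lemma dpath_walk (V : eqType) (E : finType) (src dst : E -> V) A x y p :
  dpath src dst A x y p -> walk src dst x y p.
Proof. by case/andP. Qed.

Lemma dpath_sub (V : eqType) (E : finType) (src dst : E -> V) (A B : {set E}) x y p :
  A \subset B -> dpath src dst A x y p -> dpath src dst B x y p.
Proof.
move=> AB /andP[Ha W]; rewrite /dpath W andbT.
by apply/allP=> e /(allP Ha) /(subsetP AB).
Qed.

Lemma ord2 (j : 'I_2) : j = ord0 \/ j = ord_max.
Proof. case: j => [[|[|//]]] Hj; [left|right]; exact/val_inj. Qed.

Definition reach (V : eqType) (E : Type) (src dst : E -> V) (v w : V) :=
  asb (exists p : seq E, walk src dst v w p).

Definition RR (V : eqType) (E : Type) (src dst : E -> V) (t : 'I_2 -> V) v j :=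
  reach src dst v (t j).

Definition pb (V : eqType) (E : finType) (src dst : E -> V) t (v : V) :=
  [pick e : E | [&& src e == v, RR src dst t (dst e) ord0 & RR src dst t (dst e) ord_max]].
Definition pj (V : eqType) (E : finType) (src dst : E -> V) t (v : V) j :=
  [pick e : E | (src e == v) && RR src dst t (dst e) j].
Definition oset (E : finType) (o : option E) := [set e | o == Some e].
Definition CC (V : eqType) (E : finType) (src dst : E -> V) t (v : V) : {set E} :=
  match pb src dst t v with
  | Some e => [set e]
  | None => oset (pj src dst t v ord0) :|: oset (pj src dst t v ord_max)
  end.
Definition Aset (V : eqType) (E : finType) (src dst : E -> V) t :=
  [set e | e \in CC src dst t (src e)].

Lemma K1 (V : eqType) (E : finType) (src dst : E -> V) t v e :
  e \in CC src dst t v -> src e = v /\ exists j, RR src dst t (dst e) j.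
Proof.
rewrite /CC /pb; case: pickP => [e0 /and3P[/eqP H0 H1 H2]|Hn].
  by rewrite inE => /eqP ->; split => //; exists ord0.
rewrite inE !inE /pj; case/orP.
  by case: pickP => // e1 /andP[/eqP H1 H2] /eqP[<-]; split => //; exists ord0.
by case: pickP => // e1 /andP[/eqP H1 H2] /eqP[<-]; split => //; exists ord_max.
Qed.

Lemma K2 (V : eqType) (E : finType) (src dst : E -> V) t v e e' j :
  e \in CC src dst t v -> e' \in CC src dst t v ->
  RR src dst t (dst e) j -> RR src dst t (dst e') j -> e = e'.
Proof.
rewrite /CC /pb; case: pickP => [e0 _|Hn].
  by rewrite !inE => /eqP -> /eqP ->.
have Hx : forall x j', x \in oset (pj src dst t v j') ->
   src x = v /\ RR src dst t (dst x) j'.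
  by move=> x j'; rewrite inE /pj; case: pickP => // x1 /andP[/eqP ? ?] /eqP[<-].
have Hu : forall x y j', x \in oset (pj src dst t v j') -> y \in oset (pj src dst t v j') -> x = y.
  by move=> x y j'; rewrite !inE => /eqP -> /eqP [].
have Hbad : forall x, src x = v -> RR src dst t (dst x) ord0 ->
    RR src dst t (dst x) ord_max -> False.
  by move=> x Hs H0 H1; move: (Hn x); rewrite Hs eqxx H0 H1.
rewrite !in_setU => /orP[H|H] /orP[H'|H'] Ha Hb; try exact: (Hu _ _ _ H H');
  move: (Hx _ _ H) (Hx _ _ H') => [Hs Hr] [Hs' Hr'];
  case: (ord2 j) Ha Hb => -> Ha Hb; exfalso;
  by [apply: (Hbad e Hs) | apply: (Hbad e' Hs')].
Qed.

Lemma reach_dpath (V : eqType) (E : finType) (src dst : E -> V) A v w p :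
  dpath src dst A v w p -> reach src dst v w.
Proof. by move=> /dpath_walk H; apply/asbP; exists p. Qed.

Lemma pj_some (V : eqType) (E : finType) (src dst : E -> V) t v j e :
  src e = v -> RR src dst t (dst e) j ->
  exists2 e1, pj src dst t v j = Some e1 & RR src dst t (dst e1) j.
Proof.
move=> Hs Hr; rewrite /pj; case: pickP => [e1 /andP[_ H1]|/(_ e)].
  by exists e1.
by rewrite Hs eqxx Hr.
Qed.

Lemma K3 (V : eqType) (E : finType) (src dst : E -> V) t v j :
  RR src dst t v j -> v != t j ->
  exists2 e, e \in CC src dst t v & RR src dst t (dst e) j.
Proof.
move=> /asbP[[|e p]] /=; first by move/eqP->; rewrite eqxx.
case/andP=> /eqP Hs W _.
have Hr : RR src dst t (dst e) j by apply/asbP; exists p.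
rewrite /CC /pb; case: pickP => [e0 /and3P[_ H0 H1]|Hn].
  by exists e0; rewrite ?inE //; case: (ord2 j) => ->.
case: (ord2 j) Hr => -> Hr.
- have [e1 He1 Hr1] := pj_some Hs Hr.
  by exists e1 => //; rewrite !inE He1 eqxx.
- have [e1 He1 Hr1] := pj_some Hs Hr.
  by exists e1 => //; rewrite !inE He1 eqxx orbT.
Qed.

Lemma step_proper (V : finType) (E : finType) (src dst : E -> V) e :
  acyclic src dst ->
  [set w | reach src dst (dst e) w] \proper [set w | reach src dst (src e) w].
Proof.
move=> Hac; apply/properP; split.
  apply/subsetP=> w; rewrite !inE /reach => /asbP[p Hp]; apply/asbP.
  by exists (e :: p) => /=; rewrite eqxx.
exists (src e).
  by rewrite inE /reach; apply/asbP; exists [::] => /=.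
rewrite inE /reach.
apply/negP=> /asbP[p Hp].
have : walk src dst (src e) (src e) (e :: p) by rewrite /= eqxx.
by move/Hac.
Qed.

Lemma existsE (V : finType) (E : finType) (src dst : E -> V) t j :
  acyclic src dst -> forall v, RR src dst t v j ->
  exists p, dpath src dst (Aset src dst t) v (t j) p.
Proof.
move=> Hac v.
move: {2}#|[set w | reach src dst v w]|.+1 (ltnSn #|[set w | reach src dst v w]|) => n.
elim: n v => // n IH v Hn Hr.
have [->|Hne] := eqVneq v (t j); first by exists [::]; rewrite /dpath /= eqxx.
have [e He Hre] := K3 Hr Hne.
have [Hs _] := K1 He.
have Hlt := proper_card (step_proper e Hac).
rewrite Hs in Hlt.
have [p Hp] := IH (dst e) (leq_trans Hlt Hn) Hre.
exists (e :: p); rewrite /dpath /= -/(dpath _ _ _ _ _ _) .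
case/andP: Hp => H1 H2; rewrite H1 H2 Hs eqxx !andbT.
by rewrite inE Hs.
Qed.

Lemma uniqU (V : finType) (E : finType) (src dst : E -> V) t j
  (Htgt : forall j e, src e != t j) :
  forall p q v, dpath src dst (Aset src dst t) v (t j) p ->
    dpath src dst (Aset src dst t) v (t j) q -> p = q.
Proof.
elim=> [|e p IH] [|e' q] v //=.
- move=> /dpath_walk /= /eqP Hv /dpath_walk /= /andP[/eqP Hs _].
  by move: (Htgt j e'); rewrite Hs Hv eqxx.
- move=> /dpath_walk /= /andP[/eqP Hs _] /dpath_walk /= /eqP Hv.
  by move: (Htgt j e); rewrite Hs Hv eqxx.
rewrite /dpath /= => /andP[/andP[Ha Hp] /andP[/eqP Hs W]] /andP[/andP[Ha' Hq] /andP[/eqP Hs' W']].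
rewrite inE Hs in Ha; rewrite inE Hs' in Ha'.
have Hr : RR src dst t (dst e) j by apply/asbP; exists p.
have Hr' : RR src dst t (dst e') j by apply/asbP; exists q.
have Hee := K2 Ha Ha' Hr Hr'; subst e'.
by rewrite (IH q (dst e)) // /dpath ?Hp ?Hq.
Qed.

Lemma liftG (V : eqType) (E : finType) (src dst : E -> V) (A G : {set E}) x w :
  (forall e, e \in A -> (exists q, dpath src dst A x (src e) q) -> e \in G) ->
  forall p v, (exists q, dpath src dst A x v q) ->
  dpath src dst A v w p -> dpath src dst G v w p.
Proof.
move=> HG; elim=> [|e p IH] v [q Hq] //.
rewrite /dpath /= => /andP[/andP[Ha Hp] /andP[/eqP Hs W]].
have HeG : e \in G by apply: HG => //; exists q; rewrite Hs.
have Hq' : exists q, dpath src dst A x (dst e) q.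
  exists (q ++ [:: e]); apply: (dpath_cat Hq).
  by rewrite /dpath /= Ha Hs !eqxx.
have : dpath src dst A (dst e) w p by rewrite /dpath Hp W.
move/(IH (dst e) Hq') => /andP[H1 H2].
by rewrite HeG H1 H2 Hs eqxx.
Qed.

Theorem lemma2 (V E : finType) (src dst : E -> V) (n : nat)
  (s : 'I_n -> V) (t : 'I_2 -> V)
  (Hacyc : acyclic src dst)
  (Hs_inj : injective s) (Ht_inj : injective t)
  (Hst : forall i j, s i != t j)
  (Hsrc : forall i e, dst e != s i)
  (Htgt : forall j e, src e != t j)
  (Hreach : forall i j, exists p, dpath src dst [set: E] (s i) (t j) p) :
  exists Gs : {set E},
    (forall i j, exists! p, dpath src dst Gs (s i) (t j) p) /\
    (forall e, e \in Gs ->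
       exists i j, forall p, ~~ dpath src dst (Gs :\ e) (s i) (t j) p).
Proof.
pose A := Aset src dst t.
pose Gs := [set e | (e \in A) &&
   [exists i, asb (exists q, dpath src dst A (s i) (src e) q)]].
have GA : Gs \subset A by apply/subsetP=> e; rewrite inE => /andP[].
have HG : forall i e, e \in A -> (exists q, dpath src dst A (s i) (src e) q) -> e \in Gs.
  move=> i e Ha Hq; rewrite inE Ha /=; apply/existsP; exists i; exact/asbP.
exists Gs; split.
  move=> i j.
  have Hr : RR src dst t (s i) j.
    by have [p Hp] := Hreach i j; apply/asbP; exists p; exact: dpath_walk Hp.
  have [p0 Hp0] := existsE Hacyc Hr.
  exists p0; split.
    apply: (liftG (HG i)) Hp0; exists [::]; by rewrite /dpath /= eqxx.
  by move=> p' Hp'; apply: (uniqU Htgt Hp0); apply: dpath_sub GA Hp'.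
move=> e; rewrite inE => /andP[HA /existsP[i /asbP[q Hq]]].
have HA' := HA; rewrite inE in HA'.
have [_ [j Hj]] := K1 HA'.
exists i, j => p; apply/negP => Hp.
have [p2 Hp2] := existsE Hacyc Hj.
have Hfull : dpath src dst A (s i) (t j) (q ++ e :: p2).
  apply: (dpath_cat Hq); case/andP: Hp2 => H1 H2.
  by rewrite /dpath /= HA H1 H2 !eqxx.
have Hp' : dpath src dst A (s i) (t j) p.
  apply: dpath_sub Hp; apply: subset_trans GA; exact: subD1set.
have Heq := uniqU Htgt Hp' Hfull.
case/andP: Hp => /allP /(_ e) + _; rewrite Heq mem_cat in_cons eqxx orbT => /(_ isT).
by rewrite !inE eqxx.
Qed.
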